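(* Fix an integer $c\ge1$. For each $n$, let $C_n=\{V_{1,n},\dots,V_{c,n}\}$ be a partition of $\{1,\dots,n\}$ with $n_i:=|V_{i,n}|$, let $P_n$ be a symmetric $c\times c$ matrix with entries in $[0,1]$, and let $G_n\sim\mathrm{SBM}(n;C_n,P_n)$. Let $s_n(i,i):=\binom{n_i}{2}$ and $s_n(i,j):=n_in_j$ for $i\ne j$, and let $$\mathcal{K}:=\Big\{(i,j)\in\{1,\dots,c\}^2:\ \limsup_{n\to\infty}s_n(i,j)\,(1-P_n(i,j))>0\Big\}.$$ Suppose that $n_in_j\to\infty$ for each $(i,j)\in\mathcal{K}$, and that there is a constant $C>1$ such that for all sufficiently large $n$, $$\sum_{k=1}^c n_k\,P_n(i,k)P_n(k,j)\ \ge\ C\ln(n_in_j)\quad\text{for all }(i,j)\in\mathcal{K}.$$ Then $\operatorname{diam}(G_n)\le 2$ with probability tending to $1$ as $n\to\infty$.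
   Context: Stochastic Block Model: $G\sim\mathrm{SBM}(n;C,P)$, for a partition $C=\{V_1,\dots,V_c\}$ of $V=\{1,\dots,n\}$ and a symmetric $c\times c$ matrix $P$ with entries in $[0,1]$, is the random simple undirected graph on $V$ in which, independently for each pair of distinct vertices $u\in V_i$, $v\in V_j$, the edge $\{u,v\}$ is present with probability $P(i,j)$. The diameter is the maximum shortest-path distance between two vertices ($\infty$ if disconnected). *)

(* Defs.v *)
From HB Require Import structures.
From Stdlib Require Import Reals.
From mathcomp Require Import all_boot.
Set Implicit Arguments.
Unset Strict Implicit.
Unset Printing Implicit Defensive.

Lemma Rplus_assoc' : associative Rplus.
Proof. by move=> x y z; rewrite Rplus_assoc. Qed.
Lemma Rmult_assoc' : associative Rmult.
Proof. by move=> x y z; rewrite Rmult_assoc. Qed.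
HB.instance Definition _ := Monoid.isComLaw.Build R (IZR 0) Rplus Rplus_assoc' Rplus_comm Rplus_0_l.
HB.instance Definition _ := Monoid.isComLaw.Build R (IZR 1) Rmult Rmult_assoc' Rmult_comm Rmult_1_l.

(* Vertices of G_n are 'I_n (= {0,...,n-1}); the partition C_n into c labelled
   blocks is given by a labelling f : 'I_n -> 'I_c, V_{i,n} = f^{-1}(i). *)
Definition block_size (n c : nat) (f : 'I_n -> 'I_c) (i : 'I_c) : nat :=
  #|[set v | f v == i]|.

Definition pair_count (n c : nat) (f : 'I_n -> 'I_c) (i j : 'I_c) : R :=
  if i == j then INR 'C(block_size f i, 2)
  else INR (block_size f i * block_size f j).

Definition limsup_pos (a : nat -> R) : Prop :=
  exists eps : R, Rlt 0 eps /\ forall N : nat, exists n : nat, (N <= n)%nat /\ Rlt eps (a n).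

Definition in_K (c : nat) (f : forall n : nat, 'I_n -> 'I_c)
  (P : nat -> 'I_c -> 'I_c -> R) (i j : 'I_c) : Prop :=
  limsup_pos (fun n => Rmult (pair_count (f n) i j) (Rminus 1 (P n i j))).

(* A simple graph on 'I_n is a set of ordered pairs (u,v) with u < v. *)
Definition upper_pairs (n : nat) : {set ('I_n * 'I_n)} := [set p : 'I_n * 'I_n | (nat_of_ord p.1 < nat_of_ord p.2)%N].

Definition graph_adj (n : nat) (E : {set ('I_n * 'I_n)}) (u v : 'I_n) : bool :=
  ((u, v) \in E) || ((v, u) \in E).

Definition diam_le2 (n : nat) (E : {set ('I_n * 'I_n)}) : bool :=
  [forall u : 'I_n, forall v : 'I_n, (u != v) ==>
     (graph_adj E u v || [exists w : 'I_n, graph_adj E u w && graph_adj E w v])].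

Definition sbm_weight (n c : nat) (f : 'I_n -> 'I_c) (P : 'I_c -> 'I_c -> R)
  (E : {set ('I_n * 'I_n)}) : R :=
  \big[Rmult/(IZR 1)]_(p in upper_pairs n)
     (if p \in E then P (f p.1) (f p.2) else Rminus 1 (P (f p.1) (f p.2))).

Definition sbm_prob (n c : nat) (f : 'I_n -> 'I_c) (P : 'I_c -> 'I_c -> R)
  (A : pred {set ('I_n * 'I_n)}) : R :=
  \big[Rplus/(IZR 0)]_(E : {set ('I_n * 'I_n)} | (E \subset upper_pairs n) && A E)
     sbm_weight f P E.

(* Main.v *)
Require Import Defs.
From HB Require Import structures.
From Stdlib Require Import Reals Lra Classical.
From mathcomp Require Import all_boot zify.
Set Implicit Arguments.
Unset Strict Implicit.
Unset Printing Implicit Defensive.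
Open Scope R_scope.


Lemma Rmult_0_l' : left_zero (IZR 0) Rmult. Proof. by move=> x; rewrite Rmult_0_l. Qed.
Lemma Rmult_0_r' : right_zero (IZR 0) Rmult. Proof. by move=> x; rewrite Rmult_0_r. Qed.
HB.instance Definition _ := Monoid.isMulLaw.Build R (IZR 0) Rmult Rmult_0_l' Rmult_0_r'.
Lemma Rdl : left_distributive Rmult Rplus. Proof. by move=> x y z; rewrite Rmult_plus_distr_r. Qed.
Lemma Rdr : right_distributive Rmult Rplus. Proof. by move=> x y z; rewrite Rmult_plus_distr_l. Qed.
HB.instance Definition _ := Monoid.isAddLaw.Build R Rmult Rplus Rdl Rdr.

Definition nuw (T : finType) (w : T -> bool -> R) (E : {set T}) : R :=
  \big[Rmult/1]_(p : T) w p (p \in E).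

Lemma total_mass (T : finType) (w : T -> bool -> R) :
  \big[Rplus/0]_(E : {set T}) nuw w E = \big[Rmult/1]_(p : T) (w p true + w p false).
Proof.
have -> : \big[Rmult/1]_(p : T) (w p true + w p false) =
   \big[Rmult/1]_(p : T) \big[Rplus/0]_(b : bool) w p b.
  by apply: eq_bigr => p _; rewrite big_bool /= Rplus_comm.
rewrite bigA_distr_bigA.
rewrite (reindex (fun g : {ffun T -> bool} => [set p | g p])) /=.
  by apply: eq_bigr => g _; rewrite /nuw; apply: eq_bigr => p _; rewrite inE.
exists (fun E : {set T} => [ffun p => p \in E]).
  by move=> g _; apply/ffunP => p; rewrite ffunE inE.
by move=> E _; apply/setP => p; rewrite inE ffunE.
Qed.


Lemma decomp (T : finType) (S : {set T}) (h : {set T} -> {set T} -> R) :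
  \big[Rplus/0]_(E : {set T}) h (E :&: S) (E :\: S) =
  \big[Rplus/0]_(A : {set T} | A \subset S) \big[Rplus/0]_(B : {set T} | B \subset ~: S) h A B.
Proof.
rewrite pair_big_dep /=.
rewrite (reindex_onto (fun E : {set T} => (E :&: S, E :\: S)) (fun p : {set T} * {set T} => p.1 :|: p.2)) /=.
  apply: eq_bigl => E.
  rewrite subsetIr /= setDE subsetIr /= -setDE.
  apply/esym/eqP; apply/setP => x; rewrite !inE; by case: (x \in E); case: (x \in S).
move=> [A B] /= /andP [hA hB].
congr (_, _); apply/setP => x; rewrite !inE;
  have := subsetP hA x; have := subsetP hB x; rewrite inE;
  case: (x \in A); case: (x \in B); case: (x \in S) => //= H1 H2;
  by [have := H1 isT | have := H2 isT].
Qed.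

Definition nS (T : finType) (w : T -> bool -> R) (S A : {set T}) :=
  \big[Rmult/1]_(p in S) w p (p \in A).

Lemma nuw_split (T : finType) (w : T -> bool -> R) (S E : {set T}) :
  nuw w E = nS w S (E :&: S) * nS w (~: S) (E :\: S).
Proof.
rewrite /nuw /nS (bigID (fun p => p \in S)) /=; congr (_ * _).
  apply: eq_big => //= p H; by rewrite !inE H andbT.
apply: eq_big => p; first by rewrite !inE.
move=> H; by rewrite !inE (negbTE H).
Qed.

Lemma sum_split (T : finType) (w : T -> bool -> R) (S : {set T}) (g1 g2 : {set T} -> R) :
  \big[Rplus/0]_(E : {set T}) (nuw w E * (g1 (E :&: S) * g2 (E :\: S))) =
  (\big[Rplus/0]_(A : {set T} | A \subset S) (nS w S A * g1 A)) *
  (\big[Rplus/0]_(B : {set T} | B \subset ~: S) (nS w (~: S) B * g2 B)).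
Proof.
under eq_bigr => E _ do rewrite (nuw_split w S E).
rewrite (decomp S (fun A B => nS w S A * nS w (~: S) B * (g1 A * g2 B))).
rewrite big_distrl /=; apply: eq_bigr => A _.
rewrite big_distrr /=; apply: eq_bigr => B _; ring.
Qed.

Definition Ex (T : finType) (w : T -> bool -> R) (g : {set T} -> R) :=
  \big[Rplus/0]_(E : {set T}) (nuw w E * g E).

Lemma indep (T : finType) (w : T -> bool -> R) (S : {set T}) (g1 g2 : {set T} -> R) :
  Ex w (fun E => g1 (E :&: S) * g2 (E :\: S)) * Ex w (fun _ => 1) =
  Ex w (fun E => g1 (E :&: S)) * Ex w (fun E => g2 (E :\: S)).
Proof.
rewrite /Ex /= sum_split.
have k1 : forall g : {set T} -> R, \big[Rplus/0]_(E : {set T}) (nuw w E * g (E :&: S)) =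
  (\big[Rplus/0]_(A : {set T} | A \subset S) (nS w S A * g A)) *
  (\big[Rplus/0]_(B : {set T} | B \subset ~: S) (nS w (~: S) B * 1)).
  move=> g; rewrite -sum_split; apply: eq_bigr => E _; ring.
have k2 : forall g : {set T} -> R, \big[Rplus/0]_(E : {set T}) (nuw w E * g (E :\: S)) =
  (\big[Rplus/0]_(A : {set T} | A \subset S) (nS w S A * 1)) *
  (\big[Rplus/0]_(B : {set T} | B \subset ~: S) (nS w (~: S) B * g B)).
  move=> g; rewrite -sum_split; apply: eq_bigr => E _; ring.
rewrite (k1 (fun _ => 1)) k1 k2; ring.
Qed.


Definition Ind (b : bool) : R := if b then 1 else 0.

Lemma Ex_prod (T : finType) (w : T -> bool -> R) (h : T -> bool -> R) :
  Ex w (fun E => \big[Rmult/1]_(p : T) h p (p \in E)) =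
  \big[Rmult/1]_(p : T) (w p true * h p true + w p false * h p false).
Proof.
rewrite /Ex /nuw /=.
under eq_bigr => E _ do rewrite -big_split /=.
by rewrite (total_mass (fun (p : T) (b : bool) => w p b * h p b)).
Qed.

Lemma Ex_add (T : finType) (w : T -> bool -> R) (F G : {set T} -> R) :
  Ex w (fun E => F E + G E) = Ex w F + Ex w G.
Proof.
rewrite /Ex -big_split /=; apply: eq_bigr => E _; ring.
Qed.

Lemma Ex_ext (T : finType) (w : T -> bool -> R) (F G : {set T} -> R) :
  (forall E, F E = G E) -> Ex w F = Ex w G.
Proof. by move=> H; rewrite /Ex; apply: eq_bigr => E _; rewrite H. Qed.

Lemma prod2 (T : finType) (a b : T) (F : T -> R) : a != b ->
  (forall p, p != a -> p != b -> F p = 1) ->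
  \big[Rmult/1]_(p : T) F p = F a * F b.
Proof.
move=> ab H; rewrite (bigD1 a) //= (bigD1 b) /=; last by rewrite eq_sym.
rewrite big1 ?Rmult_1_r // => p /andP [pa pb]; exact: H.
Qed.

Lemma prod1 (T : finType) (a : T) (F : T -> R) :
  (forall p, p != a -> F p = 1) ->
  \big[Rmult/1]_(p : T) F p = F a.
Proof.
move=> H; rewrite (bigD1 a) //= big1 ?Rmult_1_r // => p pa; exact: H.
Qed.

Lemma nuw_ge0 (T : finType) (w : T -> bool -> R) :
  (forall p b, 0 <= w p b) -> forall E, 0 <= nuw w E.
Proof.
move=> H E; rewrite /nuw; apply: (big_ind (fun x => 0 <= x)) => //.
- lra.
- by move=> x y hx hy; apply: Rmult_le_pos.
Qed.

Lemma Ex_le (T : finType) (w : T -> bool -> R) (F G : {set T} -> R) :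
  (forall p b, 0 <= w p b) -> (forall E, F E <= G E) -> Ex w F <= Ex w G.
Proof.
move=> hw H; rewrite /Ex; apply: (big_ind2 (fun x y => x <= y)) => //.
- lra.
- by move=> ? ? ? ? ? ?; apply: Rplus_le_compat.
- move=> E _; apply: Rmult_le_compat_l; [exact: nuw_ge0 | exact: H].
Qed.

Definition wsb n c (fn : 'I_n -> 'I_c) (Pn : 'I_c -> 'I_c -> R) (p : 'I_n * 'I_n) (b : bool) : R :=
  if p \in upper_pairs n then (if b then Pn (fn p.1) (fn p.2) else 1 - Pn (fn p.1) (fn p.2))
  else (if b then 0 else 1).


Lemma wsb_ge0 n c (fn : 'I_n -> 'I_c) (Pn : 'I_c -> 'I_c -> R)
  (P01 : forall i j, 0 <= Pn i j /\ Pn i j <= 1) p b : 0 <= wsb fn Pn p b.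
Proof.
rewrite /wsb; have := P01 (fn p.1) (fn p.2); case: (p \in _); case: b; lra.
Qed.

Lemma wsb_tot n c (fn : 'I_n -> 'I_c) (Pn : 'I_c -> 'I_c -> R) p :
  wsb fn Pn p true + wsb fn Pn p false = 1.
Proof. rewrite /wsb; case: (p \in _); ring. Qed.

Lemma total1 n c (fn : 'I_n -> 'I_c) (Pn : 'I_c -> 'I_c -> R) :
  Ex (wsb fn Pn) (fun _ => 1) = 1.
Proof.
rewrite /Ex; under eq_bigr => E _ do rewrite Rmult_1_r.
by rewrite total_mass big1 // => p _; rewrite wsb_tot.
Qed.

Lemma sbm_Ex n c (fn : 'I_n -> 'I_c) (Pn : 'I_c -> 'I_c -> R) (A : pred {set ('I_n * 'I_n)}) :
  sbm_prob fn Pn A = Ex (wsb fn Pn) (fun E => Ind (A E)).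
Proof.
rewrite /sbm_prob /Ex big_mkcond /=; apply: eq_bigr => E _.
case sub : (E \subset upper_pairs n) => /=.
  rewrite /Ind; case: (A E); last by ring.
  rewrite Rmult_1_r /nuw (bigID (fun p => p \in upper_pairs n)) /=.
  rewrite [X in _ * X]big1 ?Rmult_1_r.
    rewrite /sbm_weight; apply: eq_bigr => p pU; by rewrite /wsb pU.
  move=> p /negbTE pU; rewrite /wsb pU.
  case pE : (p \in E) => //; by have := subsetP sub p pE; rewrite pU.
have [p pE pU] : exists2 p, p \in E & p \notin upper_pairs n.
  by apply/exists_inP; move: sub; apply: contraFT; rewrite negb_exists_in => /forall_inP H;
     apply/subsetP => p /H; rewrite negbK.
rewrite /nuw (bigD1 p) //= /wsb (negbTE pU) pE; ring.
Qed.


Lemma pair_neq n (u v : 'I_n) : u != v -> (u, v) != (v, u).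
Proof. by move=> h; rewrite xpair_eqE negb_and h. Qed.

Lemma Pr_nonadj n c (fn : 'I_n -> 'I_c) (Pn : 'I_c -> 'I_c -> R)
  (Psym : forall i j, Pn i j = Pn j i) (u v : 'I_n) : u != v ->
  Ex (wsb fn Pn) (fun E => Ind (~~ graph_adj E u v)) = 1 - Pn (fn u) (fn v).
Proof.
move=> huv.
pose h := fun (p : 'I_n * 'I_n) (b : bool) => if (p == (u, v)) || (p == (v, u)) then Ind (~~ b) else 1.
have e : forall E, Ind (~~ graph_adj E u v) = \big[Rmult/1]_(p : 'I_n * 'I_n) h p (p \in E).
  move=> E; rewrite (prod2 (pair_neq huv)).
    rewrite /h !eqxx !orbT /= /graph_adj /Ind.
    case: ((u, v) \in E); case: ((v, u) \in E) => /=; ring.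
  by move=> p p1 p2; rewrite /h (negbTE p1) (negbTE p2).
rewrite (Ex_ext _ e) Ex_prod (prod2 (pair_neq huv)).
  rewrite /h !eqxx !orbT /= /Ind /= !Rmult_0_r !Rmult_1_r !Rplus_0_l /wsb /upper_pairs !inE /=.
  case: (ltngtP u v) => H.
  - ring.
  - rewrite Psym; ring.
  - by move: huv; rewrite (val_inj H) eqxx.
by move=> p p1 p2; rewrite /h (negbTE p1) (negbTE p2) !Rmult_1_r wsb_tot.
Qed.

Lemma Ex_scale (T : finType) (w : T -> bool -> R) (k : R) (F : {set T} -> R) :
  Ex w (fun E => k * F E) = k * Ex w F.
Proof. rewrite /Ex big_distrr /=; apply: eq_bigr => E _; ring. Qed.

Lemma Ind_neg b : Ind (~~ b) = 1 - Ind b.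
Proof. by case: b => /=; rewrite /Ind; ring. Qed.

Lemma Pr_adj n c (fn : 'I_n -> 'I_c) (Pn : 'I_c -> 'I_c -> R)
  (Psym : forall i j, Pn i j = Pn j i) (u v : 'I_n) : u != v ->
  Ex (wsb fn Pn) (fun E => Ind (graph_adj E u v)) = Pn (fn u) (fn v).
Proof.
move=> huv.
have := Pr_nonadj fn Psym huv.
have e : forall E, Ind (~~ graph_adj E u v) = 1 + (- 1) * Ind (graph_adj E u v).
  by move=> E; rewrite Ind_neg; ring.
rewrite (Ex_ext _ e) Ex_add total1.
rewrite Ex_scale.
have K : forall x y : R, 1 + -1 * x = 1 - y -> x = y by move=> x y; lra.
by move=> H; apply: K.
Qed.


Lemma Pr_both n c (fn : 'I_n -> 'I_c) (Pn : 'I_c -> 'I_c -> R)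
  (Psym : forall i j, Pn i j = Pn j i) (u v w : 'I_n) :
  u != v -> w != u -> w != v ->
  Ex (wsb fn Pn) (fun E => Ind (graph_adj E u w) * Ind (graph_adj E w v)) =
  Pn (fn u) (fn w) * Pn (fn w) (fn v).
Proof.
move=> uv wu wv.
have vu : v != u by rewrite eq_sym.
have uw : u != w by rewrite eq_sym.
have vw : v != w by rewrite eq_sym.
pose S := [set (u, w); (w, u)].
have e : forall E, Ind (graph_adj E u w) * Ind (graph_adj E w v) =
   (fun A => Ind (graph_adj A u w)) (E :&: S) * (fun B => Ind (graph_adj B w v)) (E :\: S).
  move=> E /=; rewrite /graph_adj !inE !xpair_eqE !eqxx /=.
  by rewrite ?(negbTE uv, negbTE vu, negbTE wu, negbTE uw, negbTE wv, negbTE vw) /= ?andbT ?orbT ?andbF.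
rewrite (Ex_ext _ e).
have := indep (wsb fn Pn) S (fun A => Ind (graph_adj A u w)) (fun B => Ind (graph_adj B w v)).
rewrite total1 Rmult_1_r => ->.
have e1 : forall E, (fun A => Ind (graph_adj A u w)) (E :&: S) = Ind (graph_adj E u w).
  move=> E /=; rewrite /graph_adj !inE !xpair_eqE !eqxx /=.
  by rewrite ?(negbTE uv, negbTE vu, negbTE wu, negbTE uw, negbTE wv, negbTE vw) /= ?andbT ?orbT ?andbF.
have e2 : forall E, (fun B => Ind (graph_adj B w v)) (E :\: S) = Ind (graph_adj E w v).
  move=> E /=; rewrite /graph_adj !inE !xpair_eqE !eqxx /=.
  by rewrite ?(negbTE uv, negbTE vu, negbTE wu, negbTE uw, negbTE wv, negbTE vw) /= ?andbT ?orbT ?andbF.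
rewrite (Ex_ext _ e1) (Ex_ext _ e2) Pr_adj // Pr_adj //.
Qed.

Definition gco n (u v w : 'I_n) (E : {set ('I_n * 'I_n)}) : R :=
  1 - Ind (graph_adj E u w) * Ind (graph_adj E w v).

Lemma Pr_nocommon n c (fn : 'I_n -> 'I_c) (Pn : 'I_c -> 'I_c -> R)
  (Psym : forall i j, Pn i j = Pn j i) (u v : 'I_n) (s : seq 'I_n) :
  u != v -> uniq s -> all (fun w => (w != u) && (w != v)) s ->
  Ex (wsb fn Pn) (fun E => \big[Rmult/1]_(w <- s) gco u v w E) =
  \big[Rmult/1]_(w <- s) (1 - Pn (fn u) (fn w) * Pn (fn w) (fn v)).
Proof.
move=> uv; elim: s => [|w s IH].
  move=> _ _; rewrite big_nil; under Ex_ext => E do rewrite big_nil; exact: total1.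
rewrite /= => /andP [ws us] /andP [/andP [wu wv] als].
have vu : v != u by rewrite eq_sym.
have uw : u != w by rewrite eq_sym.
have vw : v != w by rewrite eq_sym.
pose S := [set (u, w); (w, u); (w, v); (v, w)].
have e2 : forall E, (fun B => \big[Rmult/1]_(w' <- s) gco u v w' B) (E :\: S) =
    \big[Rmult/1]_(w' <- s) gco u v w' E.
  move=> E /=.
  rewrite big_seq_cond [RHS]big_seq_cond; apply: eq_bigr => w' /andP [w's _].
  have /andP [w'u w'v] := allP als w' w's.
  have w'w : w' != w by apply/negP => /eqP H; move: ws; rewrite -H w's.
  have uw' : u != w' by rewrite eq_sym.
  have vw' : v != w' by rewrite eq_sym.
  have ww' : w != w' by rewrite eq_sym.
  rewrite /gco /graph_adj !inE !xpair_eqE !eqxx /=.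
  by rewrite ?(negbTE uv, negbTE vu, negbTE wu, negbTE uw, negbTE wv, negbTE vw, negbTE w'u, negbTE uw', negbTE w'v, negbTE vw', negbTE w'w, negbTE ww') /= ?andbT ?orbT ?andbF ?andbT.
have e : forall E, \big[Rmult/1]_(w' <- w :: s) gco u v w' E =
   (fun A => gco u v w A) (E :&: S) * (fun B => \big[Rmult/1]_(w' <- s) gco u v w' B) (E :\: S).
  move=> E /=; rewrite big_cons; congr (_ * _).
    rewrite /gco /graph_adj !inE !xpair_eqE !eqxx /=.
    by rewrite ?(negbTE uv, negbTE vu, negbTE wu, negbTE uw, negbTE wv, negbTE vw) /= ?andbT ?orbT ?andbF.
  by rewrite e2.
rewrite (Ex_ext _ e) big_cons.
have := indep (wsb fn Pn) S (fun A => gco u v w A) (fun B => \big[Rmult/1]_(w' <- s) gco u v w' B).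
rewrite total1 Rmult_1_r => ->.
have e1 : forall E, (fun A => gco u v w A) (E :&: S) = 1 + (-1) * (Ind (graph_adj E u w) * Ind (graph_adj E w v)).
  move=> E /=; rewrite /gco /graph_adj !inE !xpair_eqE !eqxx /=.
  rewrite ?(negbTE uv, negbTE vu, negbTE wu, negbTE uw, negbTE wv, negbTE vw) /= ?andbT ?orbT ?andbF; have K : forall x : R, 1 - x = 1 + -1 * x by move=> x; ring.
  exact: K.
rewrite (Ex_ext _ e1) (Ex_ext _ e2) Ex_add total1 Ex_scale Pr_both // IH //; ring.
Qed.


Definition bad n (E : {set ('I_n * 'I_n)}) (u v : 'I_n) : bool :=
  ~~ graph_adj E u v && ~~ [exists w, graph_adj E u w && graph_adj E w v].

Lemma Ind_ge0 b : 0 <= Ind b. Proof. rewrite /Ind; case: b; lra. Qed.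
Lemma Ind_le1 b : Ind b <= 1. Proof. rewrite /Ind; case: b; lra. Qed.

Lemma bad_le1 n c (fn : 'I_n -> 'I_c) (Pn : 'I_c -> 'I_c -> R)
  (Psym : forall i j, Pn i j = Pn j i) (P01 : forall i j, 0 <= Pn i j /\ Pn i j <= 1)
  (u v : 'I_n) : u != v ->
  Ex (wsb fn Pn) (fun E => Ind (bad E u v)) <= 1 - Pn (fn u) (fn v).
Proof.
move=> uv; rewrite -(Pr_nonadj fn Psym uv); apply: Ex_le; first exact: wsb_ge0.
by move=> E; rewrite /bad /Ind; case: (graph_adj E u v); case: [exists _, _] => /=; lra.
Qed.

Lemma exp_le x y : x <= y -> exp x <= exp y.
Proof. case=> h; [by apply: Rlt_le; apply: exp_increasing | rewrite h; lra]. Qed.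

Lemma prod_exp (I : Type) (s : seq I) (x : I -> R) :
  (forall i, 0 <= x i <= 1) ->
  \big[Rmult/1]_(i <- s) (1 - x i) <= exp (- \big[Rplus/0]_(i <- s) x i).
Proof.
move=> hx; elim: s => [|i s IH].
  rewrite !big_nil Ropp_0 exp_0; lra.
rewrite !big_cons Ropp_plus_distr exp_plus.
have h1 : 1 - x i <= exp (- x i) by have := exp_ineq1_le (- x i); lra.
have h0 : 0 <= \big[Rmult/1]_(j <- s) (1 - x j).
  apply: (big_ind (fun z => 0 <= z)); [lra | move=> a b ha hb; exact: Rmult_le_pos | ].
  by move=> j _; have := hx j; lra.
apply: Rmult_le_compat => //; have := hx i; lra.
Qed.

Lemma sum_pt (T : finType) (a : T) (F : T -> R) :
  (forall p, p != a -> F p = 0) -> \big[Rplus/0]_(p : T) F p = F a.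
Proof. move=> H; rewrite (bigD1 a) //= big1 ?Rplus_0_r // => p pa; exact: H. Qed.

Lemma bad_le2 n c (fn : 'I_n -> 'I_c) (Pn : 'I_c -> 'I_c -> R)
  (Psym : forall i j, Pn i j = Pn j i) (P01 : forall i j, 0 <= Pn i j /\ Pn i j <= 1)
  (u v : 'I_n) : u != v ->
  Ex (wsb fn Pn) (fun E => Ind (bad E u v)) <=
  exp (2 - \big[Rplus/0]_(w : 'I_n) (Pn (fn u) (fn w) * Pn (fn w) (fn v))).
Proof.
move=> uv.
pose Q := fun w : 'I_n => (w != u) && (w != v).
pose s := [seq w <- index_enum 'I_n | Q w].
have hs1 : uniq s by rewrite filter_uniq // index_enum_uniq.
have hs2 : all Q s by apply/allP => w; rewrite mem_filter => /andP [].
apply: (Rle_trans _ (Ex (wsb fn Pn) (fun E => \big[Rmult/1]_(w <- s) gco u v w E))).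
  apply: Ex_le; first exact: wsb_ge0.
  move=> E; rewrite /bad /Ind; case: (graph_adj E u v) => /=.
    apply: (big_ind (fun z => 0 <= z)); [lra | move=> a b ha hb; exact: Rmult_le_pos | ].
    by move=> w _; rewrite /gco; have := Ind_le1 (graph_adj E u w); have := Ind_ge0 (graph_adj E u w);
       have := Ind_le1 (graph_adj E w v); have := Ind_ge0 (graph_adj E w v); nra.
  case: existsP => [_ | H].
    apply: (big_ind (fun z => 0 <= z)); [lra | move=> a b ha hb; exact: Rmult_le_pos | ].
    by move=> w _; rewrite /gco; have := Ind_le1 (graph_adj E u w); have := Ind_ge0 (graph_adj E u w);
       have := Ind_le1 (graph_adj E w v); have := Ind_ge0 (graph_adj E w v); nra.
  rewrite big1 //=; first lra.
  move=> w _; rewrite /gco.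
  case A1 : (graph_adj E u w); case A2 : (graph_adj E w v); rewrite /Ind /=; try ring.
  by exfalso; apply: H; exists w; rewrite A1 A2.
rewrite (Pr_nocommon fn Psym uv hs1 hs2).
apply: (Rle_trans _ _ _ (prod_exp _ _)).
  move=> w; have := P01 (fn u) (fn w); have := P01 (fn w) (fn v); split; nra.
apply: exp_le.
rewrite /s big_filter.
rewrite [X in _ <= 2 - X](bigID Q) /=.
suff : \big[Rplus/0]_(i < n | ~~ Q i) (Pn (fn u) (fn i) * Pn (fn i) (fn v)) <= 2.
  move=> H; have K : forall a b : R, b <= 2 -> - a <= 2 - (a + b) by move=> a b; lra.
  by apply: K.
apply: (Rle_trans _ (\big[Rplus/0]_(i < n) (Ind (i == u) + Ind (i == v)))).
  rewrite [X in _ <= X](bigID Q) /=.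
  have h0 : 0 <= \big[Rplus/0]_(i < n | Q i) (Ind (i == u) + Ind (i == v)).
    apply: (big_ind (fun z => 0 <= z)); [lra | move=> a b ha hb; lra | ].
    by move=> w _; apply: Rplus_le_le_0_compat; apply: Ind_ge0.
  suff : \big[Rplus/0]_(i < n | ~~ Q i) (Pn (fn u) (fn i) * Pn (fn i) (fn v)) <=
         \big[Rplus/0]_(i < n | ~~ Q i) (Ind (i == u) + Ind (i == v)).
    move=> H; have K : forall a c0 d : R, 0 <= c0 -> a <= d -> a <= c0 + d by move=> a c0 d; lra.
    by apply: K.
  apply: (big_ind2 (fun x y => x <= y)); [lra | move=> ? ? ? ? ? ?; lra | ].
  move=> w; rewrite /Q negb_and !negbK => H.
  have := P01 (fn u) (fn w); have := P01 (fn w) (fn v).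
  have := Ind_ge0 (w == u); have := Ind_ge0 (w == v).
  case/orP: H => /eqP ->; rewrite /Ind eqxx; rewrite ?(eq_sym v u) (negbTE uv); nra.
rewrite big_split /= (sum_pt (a := u)) ?(sum_pt (a := v)) /Ind ?eqxx; first lra.
  by move=> p /negbTE ->.
by move=> p /negbTE ->.
Qed.


Lemma iter_RplusK (k : nat) (K : R) : iter k (Rplus K) 0 = INR k * K.
Proof.
elim: k => [|k IH]; first by rewrite /=; ring.
rewrite S_INR iterS IH; ring.
Qed.

Lemma sum_constR (T : finType) (P : pred T) (K : R) :
  \big[Rplus/0]_(v | P v) K = INR #|[pred v | P v]| * K.
Proof. by rewrite big_const iter_RplusK. Qed.

Lemma sum_ge_term (T : finType) (P : pred T) (F : T -> R) (a : T) :
  P a -> (forall i, P i -> 0 <= F i) -> F a <= \big[Rplus/0]_(i | P i) F i.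
Proof.
move=> Pa H; rewrite (bigD1 a) //=.
have : 0 <= \big[Rplus/0]_(i | P i && (i != a)) F i.
  apply: (big_ind (fun z => 0 <= z)); [lra | move=> x y hx hy; lra | ].
  by move=> i /andP [Pi _]; apply: H.
lra.
Qed.

Lemma sum_ge0 (T : finType) (P : pred T) (F : T -> R) :
  (forall i, P i -> 0 <= F i) -> 0 <= \big[Rplus/0]_(i | P i) F i.
Proof.
move=> H; apply: (big_ind (fun z => 0 <= z)); [lra | move=> x y hx hy; lra | exact: H].
Qed.

Lemma Ex_sum (T : finType) (w : T -> bool -> R) (I : Type) (r : seq I) (P : pred I)
  (F : I -> {set T} -> R) :
  Ex w (fun E => \big[Rplus/0]_(i <- r | P i) F i E) = \big[Rplus/0]_(i <- r | P i) Ex w (F i).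
Proof.
rewrite /Ex /=; under eq_bigr => E _ do rewrite big_distrr /=.
by rewrite exchange_big.
Qed.

Lemma union_bound n c (fn : 'I_n -> 'I_c) (Pn : 'I_c -> 'I_c -> R)
  (P01 : forall i j, 0 <= Pn i j /\ Pn i j <= 1) :
  1 - sbm_prob fn Pn (@diam_le2 n) <=
  \big[Rplus/0]_(u : 'I_n) \big[Rplus/0]_(v | u != v) Ex (wsb fn Pn) (fun E => Ind (bad E u v)).
Proof.
rewrite sbm_Ex.
have e : forall E : {set ('I_n * 'I_n)}, 1 = Ind (diam_le2 E) + Ind (~~ diam_le2 E).
  by move=> E; rewrite /Ind; case: (diam_le2 E) => /=; ring.
have := total1 fn Pn; rewrite (Ex_ext _ e) Ex_add => H.
have K : forall a b d : R, a + b = 1 -> b <= d -> 1 - a <= d by move=> a b d; lra.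
apply: (K _ _ _ H).
have H2 : forall E : {set ('I_n * 'I_n)}, Ind (~~ diam_le2 E) <=
   \big[Rplus/0]_(u : 'I_n) \big[Rplus/0]_(v | u != v) Ind (bad E u v).
  move=> E; case D : (diam_le2 E) => /=.
    rewrite /Ind /=; apply: sum_ge0 => u _; apply: sum_ge0 => v _; exact: Ind_ge0.
  move/negbT: D; rewrite /diam_le2 negb_forall => /existsP [u].
  rewrite negb_forall => /existsP [v]; rewrite negb_imply => /andP [uv Hb].
  have hb : bad E u v by rewrite /bad -negb_or.
  apply: (Rle_trans _ (\big[Rplus/0]_(v0 | u != v0) Ind (bad E u v0))).
    apply: (Rle_trans _ (Ind (bad E u v))); first by rewrite hb /Ind /=; lra.
    apply: (sum_ge_term (P := fun v0 => u != v0) (F := fun v0 => Ind (bad E u v0))) => // v0 _.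
    exact: Ind_ge0.
  apply: (sum_ge_term (P := fun _ => true) (F := fun u0 => \big[Rplus/0]_(v0 | u0 != v0) Ind (bad E u0 v0))) => // u0 _.
  apply: sum_ge0 => v0 _; exact: Ind_ge0.
apply: (Rle_trans _ _ _ (Ex_le (wsb_ge0 fn P01) H2)).
rewrite Ex_sum; apply: Req_le; apply: eq_bigr => u _; by rewrite Ex_sum.
Qed.

Lemma sum_le (T : finType) (P : pred T) (F G : T -> R) :
  (forall i, P i -> F i <= G i) -> \big[Rplus/0]_(i | P i) F i <= \big[Rplus/0]_(i | P i) G i.
Proof.
move=> H; apply: (big_ind2 (fun x y => x <= y)); [lra | move=> ? ? ? ? ? ?; lra | exact: H].
Qed.

Lemma block_decomp n c (fn : 'I_n -> 'I_c) (X : 'I_n -> 'I_n -> R) :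
  \big[Rplus/0]_(u : 'I_n) \big[Rplus/0]_(v | u != v) X u v =
  \big[Rplus/0]_(i : 'I_c) \big[Rplus/0]_(j : 'I_c)
     \big[Rplus/0]_(u | fn u == i) \big[Rplus/0]_(v | (u != v) && (fn v == j)) X u v.
Proof.
rewrite (partition_big fn predT) //=; apply: eq_bigr => i _.
rewrite -exchange_big /=; apply: eq_bigr => u _.
by rewrite (partition_big fn predT).
Qed.

Lemma block_count n c (fn : 'I_n -> 'I_c) (i j : 'I_c) (K : R) :
  \big[Rplus/0]_(u | fn u == i) \big[Rplus/0]_(v | (u != v) && (fn v == j)) K =
  INR (block_size fn i) * INR (block_size fn j - (i == j)) * K.
Proof.
have e : forall u, fn u == i -> \big[Rplus/0]_(v | (u != v) && (fn v == j)) K =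
     INR (block_size fn j - (i == j)) * K.
  move=> u /eqP fu; rewrite sum_constR; congr (INR _ * _).
  rewrite /block_size.
  have -> : #|[set v | fn v == j]| = #|[pred v | fn v == j]| by apply: eq_card => v; rewrite !inE.
  case: (eqVneq i j) => [ij | ij] /=.
    rewrite [in RHS](cardD1 u) inE /= fu ij eqxx add1n subn1 /=.
    apply: eq_card => v; rewrite !inE /= eq_sym; by case: (u == v); case: (fn v == j).
  rewrite subn0; apply: eq_card => v; rewrite !inE /=.
  case: (eqVneq (fn v) j) => [fv | fv]; rewrite ?andbT ?andbF //.
  by apply/eqP => uv; move: ij; rewrite -fu -fv uv eqxx.
rewrite (eq_bigr _ e) sum_constR Rmult_assoc; congr (INR _ * _).
rewrite /block_size; by apply: eq_card => v; rewrite !inE.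
Qed.


Lemma two_bin2 k : (2 * 'C(k, 2) = k * (k - 1))%N.
Proof.
elim: k => [|k IH]; first by [].
rewrite binS bin1 mulnDr IH; case: k {IH} => [|k] //=; nia.
Qed.

Lemma sum_cv0 (I : Type) (r : seq I) (F : I -> nat -> R) :
  (forall i, Un_cv (F i) 0) -> Un_cv (fun n => \big[Rplus/0]_(i <- r) F i n) 0.
Proof.
move=> H; elim: r => [|x r IH].
  move=> eps he; exists 0%nat => n _; rewrite big_nil /Rdist Rminus_0_r Rabs_R0; lra.
move=> eps he; case: (CV_plus _ _ _ _ (H x) IH eps he) => N HN; exists N => n hn.
rewrite big_cons; have := HN n hn; by rewrite Rplus_0_r.
Qed.

Lemma cv0_le (a b : nat -> R) (N0 : nat) :
  (forall n, (N0 <= n)%nat -> 0 <= a n <= b n) -> Un_cv b 0 -> Un_cv a 0.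
Proof.
move=> H hb eps he; case: (hb eps he) => N HN; exists (maxn N N0) => n hn.
have hn1 : (N <= n)%coq_nat by apply/leP; move/leP: hn; rewrite geq_max => /andP [].
have hn2 : (N0 <= n)%N by move/leP: hn; rewrite geq_max => /andP [].
have := HN n hn1; have := H n hn2; rewrite /Rdist !Rminus_0_r => hab.
rewrite !Rabs_right; lra.
Qed.

Lemma notK_cv0 (s : nat -> R) :
  (forall n, 0 <= s n) ->
  ~ (exists eps : R, 0 < eps /\ forall N : nat, exists n : nat, (N <= n)%nat /\ eps < s n) ->
  Un_cv s 0.
Proof.
move=> s0 H eps he.
have [N HN] : exists N : nat, forall n, (N <= n)%nat -> ~ (eps / 2 < s n).
  apply: NNPP => H1; apply: H; exists (eps / 2); split; first lra.
  move=> N; apply: NNPP => H2; apply: H1; exists N => n hn H3; apply: H2; by exists n.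
exists N => n /leP hn; have := HN n hn; have := s0 n; rewrite /Rdist Rminus_0_r => h1 h2.
rewrite Rabs_right; lra.
Qed.

Lemma K_cv0 (C : R) (x S a : nat -> R) (N : nat) :
  1 < C -> cv_infty x ->
  (forall n, (N <= n)%nat -> C * ln (x n) <= S n) ->
  (forall n, 0 <= a n /\ a n <= x n * exp (2 - S n)) ->
  Un_cv a 0.
Proof.
move=> hC hx hS ha eps he.
pose L := ln (eps / exp 2) / (1 - C).
case: (hx (exp L)) => N1 HN1.
exists (maxn N N1) => n /leP hn.
have hnN : (N <= n)%nat by move: hn; rewrite geq_max => /andP [].
have hnN1 : (N1 <= n)%coq_nat by apply/leP; move: hn; rewrite geq_max => /andP [].
have hxn := HN1 n hnN1.
have hL := exp_pos L.
have xpos : 0 < x n by lra.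
have lnx : L < ln (x n) by rewrite -{1}(ln_exp L); apply: ln_increasing.
have h1 : (1 - C) * ln (x n) < ln (eps / exp 2).
  have -> : ln (eps / exp 2) = (1 - C) * L by rewrite /L; field; lra.
  nra.
have e2 : 0 < exp 2 := exp_pos 2.
have h2 : exp ((1 - C) * ln (x n)) < eps / exp 2.
  rewrite -[X in _ < X](exp_ln (eps / exp 2)); first exact: exp_increasing.
  by apply: Rdiv_lt_0_compat.
have h3 : x n * exp (2 - S n) <= exp 2 * exp ((1 - C) * ln (x n)).
  rewrite -exp_plus -{1}(exp_ln (x n) xpos) -exp_plus; apply: exp_le.
  have := hS n hnN; lra.
have := ha n; rewrite /Rdist Rminus_0_r => [[a0 a1]].
rewrite Rabs_right; last lra.
have : exp 2 * exp ((1 - C) * ln (x n)) < exp 2 * (eps / exp 2) by apply: Rmult_lt_compat_l.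
have -> : exp 2 * (eps / exp 2) = eps by field; lra.
lra.
Qed.


Lemma Ex_ge0 (T : finType) (w : T -> bool -> R) (F : {set T} -> R) :
  (forall p b, 0 <= w p b) -> (forall E, 0 <= F E) -> 0 <= Ex w F.
Proof.
move=> hw hF; rewrite /Ex; apply: sum_ge0 => E _; apply: Rmult_le_pos; [exact: nuw_ge0 | exact: hF].
Qed.

Lemma cv0_scale2 (s : nat -> R) : Un_cv s 0 -> Un_cv (fun n => 2 * s n) 0.
Proof.
move=> H eps he; case: (H (eps / 2)); first lra.
move=> N HN; exists N => n hn; have := HN n hn; rewrite /Rdist !Rminus_0_r Rabs_mult (Rabs_right 2); lra.
Qed.

Lemma block_sum n c (fn : 'I_n -> 'I_c) (Pn : 'I_c -> 'I_c -> R) (u v : 'I_n) :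
  \big[Rplus/0]_(w : 'I_n) (Pn (fn u) (fn w) * Pn (fn w) (fn v)) =
  \big[Rplus/0]_(k < c) Rmult (Rmult (INR (block_size fn k)) (Pn (fn u) k)) (Pn k (fn v)).
Proof.
rewrite (partition_big fn predT) //=; apply: eq_bigr => k _.
have e : forall w, true && (fn w == k) -> Pn (fn u) (fn w) * Pn (fn w) (fn v) = Pn (fn u) k * Pn k (fn v).
  by move=> w /= /eqP ->.
rewrite (eq_bigr _ e) sum_constR /block_size.
have -> : #|[set v0 | fn v0 == k]| = #|[pred w | true && (fn w == k)]| by apply: eq_card => w; rewrite !inE.
by rewrite Rmult_assoc.
Qed.

Theorem lemma3p1 (c : nat) (hc : (1 <= c)%nat)
  (f : forall n : nat, 'I_n -> 'I_c)
  (P : nat -> 'I_c -> 'I_c -> R)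
  (Psym : forall (n : nat) (i j : 'I_c), P n i j = P n j i)
  (P01 : forall (n : nat) (i j : 'I_c), Rle 0 (P n i j) /\ Rle (P n i j) 1)
  (hinf : forall i j : 'I_c, in_K f P i j ->
     cv_infty (fun n => INR (block_size (f n) i * block_size (f n) j)))
  (hdeg : exists C : R, Rlt 1 C /\ exists N : nat, forall n : nat, (N <= n)%nat ->
     forall i j : 'I_c, in_K f P i j ->
       Rle (Rmult C (ln (INR (block_size (f n) i * block_size (f n) j))))
           (\big[Rplus/(IZR 0)]_(k < c) Rmult (Rmult (INR (block_size (f n) k)) (P n i k)) (P n k j))) :
  Un_cv (fun n => sbm_prob (f n) (P n) (@diam_le2 n)) (IZR 1).
Proof.
pose bsn n i := block_size (f n) i.
pose a := fun n (i j : 'I_c) => \big[Rplus/0]_(u | f n u == i)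
   \big[Rplus/0]_(v | (u != v) && (f n v == j)) Ex (wsb (f n) (P n)) (fun E => Ind (bad E u v)).
pose S := fun n (i j : 'I_c) =>
   \big[Rplus/(IZR 0)]_(k < c) Rmult (Rmult (INR (block_size (f n) k)) (P n i k)) (P n k j).
have hw : forall n p b, 0 <= wsb (f n) (P n) p b.
  by move=> n p b; apply: wsb_ge0 => i j; exact: P01.
have a0 : forall n i j, 0 <= a n i j.
  move=> n i j; apply: sum_ge0 => u _; apply: sum_ge0 => v _; apply: Ex_ge0; first exact: hw.
  move=> E; exact: Ind_ge0.
have aA : forall n i j, a n i j <= INR (bsn n i) * INR (bsn n j - (i == j)) * (1 - P n i j).
  move=> n i j; rewrite /bsn -block_count; apply: sum_le => u /eqP fu.
  apply: sum_le => v /andP [uv /eqP fv].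
  by have := bad_le1 (f n) (Psym n) (P01 n) uv; rewrite fu fv.
have aB : forall n i j, a n i j <= INR (bsn n i) * INR (bsn n j - (i == j)) * exp (2 - S n i j).
  move=> n i j; rewrite /bsn -block_count; apply: sum_le => u /eqP fu.
  apply: sum_le => v /andP [uv /eqP fv].
  by have := bad_le2 (f n) (Psym n) (P01 n) uv; rewrite block_sum fu fv.
have cnt1 : forall n i j, INR (bsn n i) * INR (bsn n j - (i == j)) <= INR (bsn n i * bsn n j).
  move=> n i j; rewrite -mult_INR; apply: le_INR; apply/leP; apply: leq_mul => //; apply: leq_subr.
have cnt2 : forall n i j, INR (bsn n i) * INR (bsn n j - (i == j)) <= 2 * pair_count (f n) i j.
  move=> n i j; rewrite /pair_count /bsn; case: (eqVneq i j) => [ij | ij].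
    rewrite -ij /= -mult_INR multE -two_bin2 -multE mult_INR /=; lra.
  rewrite /= subn0 -mult_INR multE; have := pos_INR (block_size (f n) i * block_size (f n) j); lra.
have hcv : forall i j, Un_cv (fun n => a n i j) 0.
  move=> i j; case: (classic (in_K f P i j)) => hK.
    case: hdeg => C [hC [N hN]].
    apply: (K_cv0 (C := C) (x := fun n => INR (bsn n i * bsn n j)) (S := fun n => S n i j) (N := N)) => //.
    - exact: hinf.
    - move=> n hn; exact: hN.
    - move=> n; split; first exact: a0.
      apply: (Rle_trans _ _ _ (aB n i j)); apply: Rmult_le_compat_r; [by left; apply: exp_pos | exact: cnt1].
  pose s := fun n => pair_count (f n) i j * (1 - P n i j).
  have hs : Un_cv s 0.
    apply: notK_cv0; last exact: hK.
    move=> n; apply: Rmult_le_pos; last by have := P01 n i j; lra.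
    rewrite /pair_count; case: (i == j); exact: pos_INR.
  apply: (cv0_le (b := fun n => 2 * s n) (N0 := 0)); last exact: cv0_scale2.
  move=> n _; split; first exact: a0.
  apply: (Rle_trans _ _ _ (aA n i j)); rewrite /s -Rmult_assoc; apply: Rmult_le_compat_r.
    by have := P01 n i j; lra.
  exact: cnt2.
have hsum : Un_cv (fun n => \big[Rplus/0]_(i : 'I_c) \big[Rplus/0]_(j : 'I_c) a n i j) 0.
  by apply: sum_cv0 => i; apply: sum_cv0 => j; exact: hcv.
move=> eps he; case: (hsum eps he) => N HN; exists N => n hn.
have h1 := union_bound (f n) (P01 n); rewrite (block_decomp (f n)) in h1.
have h2 : sbm_prob (f n) (P n) (@diam_le2 n) <= 1.
  rewrite sbm_Ex -(total1 (f n) (P n)); apply: Ex_le; first exact: hw.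
  move=> E; exact: Ind_le1.
have := HN n hn; rewrite /Rdist Rminus_0_r => h3.
have h4 := Rle_abs (\big[Rplus/0]_(i : 'I_c) \big[Rplus/0]_(j : 'I_c) a n i j).
rewrite Rabs_minus_sym Rabs_right; last lra.
have h5 : 1 - sbm_prob (f n) (P n) (@diam_le2 n) <= \big[Rplus/0]_(i : 'I_c) \big[Rplus/0]_(j : 'I_c) a n i j by exact: h1.
lra.
Qed.
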